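(* Let $\mathbb{K}$ be an arbitrary field and let $A$ be a two-dimensional simple evolution $\mathbb{K}$-algebra. Then $A$ is isomorphic to an algebra of exactly one of the following three types (all parameters are nonzero scalars of $\mathbb{K}$): \begin{itemize} \item type $\mathbf{II}^{0,2}_{\lambda}$: the evolution algebra with natural basis $\{e_1,e_2\}$ and structure matrix $\begin{pmatrix}0&\lambda\\ 1&0\end{pmatrix}$ (i.e. $e_1^2=e_2$, $e_2^2=\lambda e_1$), $\lambda\in\mathbb{K}^\times$; \item type $\mathbf{II}^{1,3}_{\lambda}$: structure matrix $\begin{pmatrix}1&\lambda\\ 1&0\end{pmatrix}$ (i.e. $e_1^2=e_1+e_2$, $e_2^2=\lambda e_1$), $\lambda\in\mathbb{K}^\times$; \item type $\mathbf{II}^{2,4}_{\lambda,\mu}$: structure matrix $\begin{pmatrix}1&\lambda\\ \mu&1\end{pmatrix}$ (i.e. $e_1^2=e_1+\mu e_2$, $e_2^2=\lambda e_1+e_2$), $\lambda,\mu\in\mathbb{K}^\times$ with $\lambda\mu\neq 1$. \end{itemize}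
   Context: An evolution algebra over a field $\mathbb{K}$ is a $\mathbb{K}$-algebra $A$ with a basis $\{e_1,\dots,e_n\}$ (a natural basis) such that $e_ie_j=0$ for all $i\neq j$. The structure matrix $(\omega_{ij})$ relative to this basis is defined by $e_i^2=\sum_{j}\omega_{ji}e_j$. A $\mathbb{K}$-algebra $A$ is simple if $A^2\neq 0$ and its only ideals are $0$ and $A$. *)

(* Defs.v *)
From HB Require Import structures.
From mathcomp Require Import all_boot all_order all_algebra.
Set Implicit Arguments. Unset Strict Implicit. Unset Printing Implicit Defensive.
Import Order.TTheory GRing.Theory Num.Theory.
Local Open Scope ring_scope.

(* A 2-dimensional K-algebra is modelled as the vector space K^2 = 'rV[K]_2
   equipped with a multiplication [mul]; the algebra axioms (bilinearity)
   are stated as a hypothesis [bilinear2]. *)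
Definition bilinear2 (K : fieldType) (mul : 'rV[K]_2 -> 'rV[K]_2 -> 'rV[K]_2) :=
  (forall (a : K) x y z, mul (a *: x + y) z = a *: mul x z + mul y z) /\
  (forall (a : K) x y z, mul z (a *: x + y) = a *: mul z x + mul z y).

Definition is_evolution (K : fieldType) (mul : 'rV[K]_2 -> 'rV[K]_2 -> 'rV[K]_2) :=
  exists B : 'M[K]_2, B \in unitmx /\
    forall i j : 'I_2, i != j -> mul (row i B) (row j B) = 0.

(* Two-sided ideal, represented by its row space I (a subspace of K^2). *)
Definition is_ideal (K : fieldType) (mul : 'rV[K]_2 -> 'rV[K]_2 -> 'rV[K]_2)
  (I : 'M[K]_2) :=
  forall x y : 'rV[K]_2, (x <= I)%MS -> (mul x y <= I)%MS /\ (mul y x <= I)%MS.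

Definition is_simple (K : fieldType) (mul : 'rV[K]_2 -> 'rV[K]_2 -> 'rV[K]_2) :=
  (exists x y, mul x y != 0) /\
  forall I : 'M[K]_2, is_ideal mul I -> \rank I = 0%N \/ \rank I = 2%N.

(* Evolution algebra with natural basis the standard basis and structure
   matrix W: e_i^2 = \sum_j W j i e_j, e_i e_j = 0 (i<>j). In coordinates:
   (x y)_j = \sum_i W j i x_i y_i. *)
Definition evoMul (K : fieldType) (W : 'M[K]_2) (x y : 'rV[K]_2) : 'rV[K]_2 :=
  \row_(j < 2) \sum_(i < 2) W j i * x 0 i * y 0 i.

Definition mx2 (K : fieldType) (a b c d : K) : 'M[K]_2 :=
  \matrix_(i < 2, j < 2)
    if (i == 0 :> nat) then (if (j == 0 :> nat) then a else b)
    else (if (j == 0 :> nat) then c else d).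

Definition alg_iso (K : fieldType) (mul1 mul2 : 'rV[K]_2 -> 'rV[K]_2 -> 'rV[K]_2) :=
  exists P : 'M[K]_2, P \in unitmx /\
    forall x y, mul1 x y *m P = mul2 (x *m P) (y *m P).

Definition typeII02 (K : fieldType) (l : K) := evoMul (mx2 0 l 1 0).
Definition typeII13 (K : fieldType) (l : K) := evoMul (mx2 1 l 1 0).
Definition typeII24 (K : fieldType) (l m : K) := evoMul (mx2 1 l m 1).

(* Main.v *)
Require Import Defs.
From HB Require Import structures.
From mathcomp Require Import all_boot all_order all_algebra.
From mathcomp Require Import ring.
Set Implicit Arguments. Unset Strict Implicit. Unset Printing Implicit Defensive.
Import Order.TTheory GRing.Theory Num.Theory.
Local Open Scope ring_scope.


Section S.
Variable K : fieldType.
Notation i0 := (@ord0 1).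
Notation i1 := (@ord_max 1).

Lemma ord2 (k : 'I_2) : k = i0 \/ k = i1.
Proof. case: k => [[|[|k]] Hk]; [left|right|by []]; exact: val_inj. Qed.

Lemma sum2 (V : nmodType) (F : 'I_2 -> V) : \sum_(i < 2) F i = F i0 + F i1.
Proof. by rewrite big_ord_recr big_ord_recr big_ord0 /= add0r; congr (F _ + F _); apply: val_inj. Qed.

Lemma evoE (W : 'M[K]_2) x y j :
  evoMul W x y 0 j = W j i0 * x 0 i0 * y 0 i0 + W j i1 * x 0 i1 * y 0 i1.
Proof. by rewrite /evoMul mxE sum2. Qed.

Lemma mulE2 (x : 'rV[K]_2) (P : 'M[K]_2) k :
  (x *m P) 0 k = x 0 i0 * P i0 k + x 0 i1 * P i1 k.
Proof. by rewrite mxE sum2. Qed.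

Lemma mx2E (a b c d : K) :
  [/\ mx2 a b c d i0 i0 = a, mx2 a b c d i0 i1 = b, mx2 a b c d i1 i0 = c
   & mx2 a b c d i1 i1 = d].
Proof. by rewrite !mxE. Qed.

Lemma rv2P (x y : 'rV[K]_2) : x 0 i0 = y 0 i0 -> x 0 i1 = y 0 i1 -> x = y.
Proof. by move=> h0 h1; apply/rowP => k; case: (ord2 k) => ->; rewrite ?[0]ord1 /=. Qed.

Definition Wof (mul : 'rV[K]_2 -> 'rV[K]_2 -> 'rV[K]_2) (B : 'M[K]_2) : 'M[K]_2 :=
  \matrix_(j < 2, i < 2) (mul (row i B) (row i B) *m invmx B) 0 j.

Lemma bil_facts (mul : 'rV[K]_2 -> 'rV[K]_2 -> 'rV[K]_2) : bilinear2 mul ->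
  [/\ forall a x y z, mul (a *: x + y) z = a *: mul x z + mul y z,
      forall a x y z, mul z (a *: x + y) = a *: mul z x + mul z y,
      forall a x z, mul (a *: x) z = a *: mul x z &
      forall a x z, mul z (a *: x) = a *: mul z x].
Proof.
case=> hl hr.
have h0l z : mul 0 z = 0.
  have := hl 1 0 0 z; rewrite !scale1r !addr0 => h; by apply: (addrI (mul 0 z)); rewrite addr0 -h.
have h0r z : mul z 0 = 0.
  have := hr 1 0 0 z; rewrite !scale1r !addr0 => h; by apply: (addrI (mul z 0)); rewrite addr0 -h.
split=> // a x z.
  by have := hl a x 0 z; rewrite addr0 h0l addr0.
by have := hr a x 0 z; rewrite addr0 h0r addr0.
Qed.

Lemma expand (mul : 'rV[K]_2 -> 'rV[K]_2 -> 'rV[K]_2) (B : 'M[K]_2) :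
  bilinear2 mul -> B \in unitmx ->
  (forall i j : 'I_2, i != j -> mul (row i B) (row j B) = 0) ->
  forall x y, mul x y *m invmx B = evoMul (Wof mul B) (x *m invmx B) (y *m invmx B).
Proof.
move=> /bil_facts [hl hr hsl hsr] hB hev x y.
set a := x *m invmx B; set b := y *m invmx B.
have ex : x = a 0 i0 *: row i0 B + a 0 i1 *: row i1 B.
  by rewrite -[in LHS](mulmxKV hB x) -/a mulmx_sum_row sum2.
have ey : y = b 0 i0 *: row i0 B + b 0 i1 *: row i1 B.
  by rewrite -[in LHS](mulmxKV hB y) -/b mulmx_sum_row sum2.
have h01 : mul (row i0 B) (row i1 B) = 0 by apply: hev.
have h10 : mul (row i1 B) (row i0 B) = 0 by apply: hev.
have -> : mul x y = (a 0 i0 * b 0 i0) *: mul (row i0 B) (row i0 B)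
                 + (a 0 i1 * b 0 i1) *: mul (row i1 B) (row i1 B).
  rewrite {1}ex {1}ey !hl !hr !hsr !hsl h01 h10 !scaler0 !addr0 add0r !scalerA.
  by rewrite (mulrC (b 0 i1)).
rewrite mulmxDl -!scalemxAl.
by apply: rv2P; rewrite evoE !mxE; ring.
Qed.

Definition Mul := 'rV[K]_2 -> 'rV[K]_2 -> 'rV[K]_2.

Lemma iso_sym (m1 m2 : Mul) : alg_iso m1 m2 -> alg_iso m2 m1.
Proof.
case=> P [hP h]; exists (invmx P); split; first by rewrite unitmx_inv.
move=> x y; rewrite -{1}(mulmxKV hP x) -{1}(mulmxKV hP y) -h.
by rewrite mulmxK.
Qed.

Lemma iso_trans (m1 m2 m3 : Mul) : alg_iso m1 m2 -> alg_iso m2 m3 -> alg_iso m1 m3.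
Proof.
case=> P [hP h]; case=> Q [hQ h'].
exists (P *m Q); split; first by rewrite unitmx_mul hP hQ.
by move=> x y; rewrite mulmxA h h' !mulmxA.
Qed.

Definition ideal_simple (m : Mul) :=
  forall I : 'M[K]_2, is_ideal m I -> \rank I = 0%N \/ \rank I = 2%N.

Lemma simple_transfer (m1 m2 : Mul) : alg_iso m1 m2 -> ideal_simple m1 -> ideal_simple m2.
Proof.
case=> P [hP h] hs I hI.
have hPi : invmx P \in unitmx by rewrite unitmx_inv.
have r : \rank (I *m invmx P) = \rank I by rewrite mxrankMfree // row_free_unit.
rewrite -r; apply: hs => x y hx.
have hxP : (x *m P <= I)%MS.
  by have := submxMr P hx; rewrite mulmxKV.
have [h1 h2] := hI _ (y *m P) hxP.
rewrite -(mulmxK hP (m1 x y)) -(mulmxK hP (m1 y x)) !h.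
by split; apply: submxMr.
Qed.

Lemma rank1_ideal (m : Mul) (r : 'rV[K]_2) : r != 0 ->
  (forall x y, (exists a, x = a *: r) -> (exists c, m x y = c *: r) /\ (exists c, m y x = c *: r)) ->
  ~ ideal_simple m.
Proof.
move=> r0 hcl hs.
pose C : 'M[K]_(2,1) := const_mx 1.
pose I := C *m r.
have rI : (r <= I)%MS.
  have -> : r = row i0 I by apply/rowP => j; rewrite !mxE big_ord1 !mxE mul1r.
  exact: row_sub.
have sI x : (x <= I)%MS -> exists a, x = a *: r.
  case/submxP => D ->; exists ((D *m C) 0 0).
  by rewrite /I mulmxA {1}(mx11_scalar (D *m C)) mul_scalar_mx.
have hI : is_ideal m I.
  move=> x y /sI hx; have [[c1 ->] [c2 ->]] := hcl x y hx.
  by split; apply: scalemx_sub.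
have r1 : (\rank I <= 1)%N.
  exact: leq_trans (mxrankM_maxl _ _) (rank_leq_col C).
have rn0 : \rank I != 0%N.
  rewrite mxrank_eq0; apply: contraNneq r0 => I0.
  by have := rI; rewrite I0 submx0 => /eqP ->.
by case: (hs I hI) => e; move: r1 rn0; rewrite e.
Qed.

Lemma W_conds (W : 'M[K]_2) : ideal_simple (evoMul W) ->
  [/\ W i1 i0 != 0, W i0 i1 != 0 & W i0 i0 * W i1 i1 - W i0 i1 * W i1 i0 != 0].
Proof.
move=> hs.
have h10 : W i1 i0 != 0.
  apply/negP => /eqP h; apply: (rank1_ideal (r := delta_mx 0 i0)) hs.
    apply/negP => /eqP e; have := congr1 (fun v : 'rV[K]_2 => v 0 i0) e.
    by rewrite ?mxE /= => /eqP; rewrite oner_eq0.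
  move=> x y [a ->]; split.
    exists (W i0 i0 * a * y 0 i0); apply: rv2P; rewrite evoE !mxE /=; rewrite ?h; ring.
  exists (W i0 i0 * a * y 0 i0); apply: rv2P; rewrite evoE !mxE /=; rewrite ?h; ring.
have h01 : W i0 i1 != 0.
  apply/negP => /eqP h; apply: (rank1_ideal (r := delta_mx 0 i1)) hs.
    apply/negP => /eqP e; have := congr1 (fun v : 'rV[K]_2 => v 0 i1) e.
    by rewrite ?mxE /= => /eqP; rewrite oner_eq0.
  move=> x y [a ->]; split.
    exists (W i1 i1 * a * y 0 i1); apply: rv2P; rewrite evoE !mxE /=; rewrite ?h; ring.
  exists (W i1 i1 * a * y 0 i1); apply: rv2P; rewrite evoE !mxE /=; rewrite ?h; ring.
split=> //; apply/negP => /eqP hD.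
have eW : W i0 i1 = W i0 i0 * W i1 i1 / W i1 i0.
  by apply/(mulIf h10); rewrite mulfVK //; apply/eqP; rewrite eq_sym -subr_eq0 hD.
apply: (rank1_ideal (r := \row_j W j i0)) hs.
  apply/negP => /eqP e; have := congr1 (fun v : 'rV[K]_2 => v 0 i1) e.
  by rewrite !mxE; apply/eqP.
have key x y : evoMul W x y = (x 0 i0 * y 0 i0 + W i1 i1 / W i1 i0 * x 0 i1 * y 0 i1) *: \row_j W j i0.
  by apply: rv2P; rewrite evoE !mxE ?eW; field.
by move=> x y _; split; [exists (x 0 i0 * y 0 i0 + W i1 i1 / W i1 i0 * x 0 i1 * y 0 i1)
  | exists (y 0 i0 * x 0 i0 + W i1 i1 / W i1 i0 * y 0 i1 * x 0 i1)]; rewrite key.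
Qed.

Definition cnt (W : 'M[K]_2) : nat := addn (W i0 i0 != 0) (W i1 i1 != 0).

Lemma invariant (W W' : 'M[K]_2) :
  W' i0 i0 * W' i1 i1 - W' i0 i1 * W' i1 i0 != 0 ->
  alg_iso (evoMul W) (evoMul W') -> cnt W = cnt W'.
Proof.
move=> hD [P [hP h]].
have inj (x : 'rV[K]_2) : x *m P = 0 -> x = 0.
  by move=> e; rewrite -(mulmxK hP x) e mul0mx.
have ne (i : 'I_2) : P i i0 != 0 \/ P i i1 != 0.
  case: (eqVneq (P i i0) 0) => h0; last by left.
  case: (eqVneq (P i i1) 0) => h1; last by right.
  suff : delta_mx 0 i = 0 :> 'rV[K]_2.
    move/(congr1 (fun v : 'rV[K]_2 => v 0 i)); rewrite !mxE !eqxx /= => /eqP.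
    by rewrite oner_eq0.
  case: (ord2 i) h0 h1 => -> h0 h1; apply: inj; apply: rv2P;
    by rewrite !mulE2 !mxE /= ?h0 ?h1; ring.
have e01 := h (delta_mx 0 i0) (delta_mx 0 i1).
set a := P i0 i0; set b := P i0 i1; set c := P i1 i0; set d := P i1 i1.
have E k : W' k i0 * (a * c) + W' k i1 * (b * d) = 0.
  have e := congr1 (fun v : 'rV[K]_2 => v 0 k) e01; simpl in e.
  transitivity (evoMul W' (delta_mx 0 i0 *m P) (delta_mx 0 i1 *m P) 0 k).
    by rewrite evoE !mulE2 !mxE /= /a /b /c /d; ring.
  by rewrite -e mulE2 !evoE !mxE /=; ring.
have hac : a * c = 0.
  have : a * c * (W' i0 i0 * W' i1 i1 - W' i0 i1 * W' i1 i0) = 0.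
    transitivity (W' i1 i1 * (W' i0 i0 * (a * c) + W' i0 i1 * (b * d))
                - W' i0 i1 * (W' i1 i0 * (a * c) + W' i1 i1 * (b * d))); first ring.
    by rewrite E E; ring.
  by move/eqP; rewrite mulf_eq0 (negbTE hD) orbF => /eqP.
have hbd : b * d = 0.
  have : b * d * (W' i0 i0 * W' i1 i1 - W' i0 i1 * W' i1 i0) = 0.
    transitivity (W' i0 i0 * (W' i1 i0 * (a * c) + W' i1 i1 * (b * d))
                - W' i1 i0 * (W' i0 i0 * (a * c) + W' i0 i1 * (b * d))); first ring.
    by rewrite E E; ring.
  by move/eqP; rewrite mulf_eq0 (negbTE hD) orbF => /eqP.
have Q0 k : W i0 i0 * P i0 k + W i1 i0 * P i1 k = W' k i0 * a ^+ 2 + W' k i1 * b ^+ 2.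
  have e := congr1 (fun v : 'rV[K]_2 => v 0 k) (h (delta_mx 0 i0) (delta_mx 0 i0)); simpl in e.
  transitivity ((evoMul W (delta_mx 0 i0) (delta_mx 0 i0) *m P) 0 k).
    by rewrite mulE2 !evoE !mxE /=; ring.
  by rewrite e evoE !mulE2 !mxE /= /a /b; ring.
have Q1 k : W i0 i1 * P i0 k + W i1 i1 * P i1 k = W' k i0 * c ^+ 2 + W' k i1 * d ^+ 2.
  have e := congr1 (fun v : 'rV[K]_2 => v 0 k) (h (delta_mx 0 i1) (delta_mx 0 i1)); simpl in e.
  transitivity ((evoMul W (delta_mx 0 i1) (delta_mx 0 i1) *m P) 0 k).
    by rewrite mulE2 !evoE !mxE /=; ring.
  by rewrite e evoE !mulE2 !mxE /= /c /d; ring.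
have nz (u v z : K) : z != 0 -> u = v * z -> (u != 0) = (v != 0).
  by move=> hz ->; rewrite mulf_eq0 (negbTE hz) orbF.
rewrite /cnt.
case: (eqVneq a 0) => ha.
  have hb : b != 0 by case: (ne i0) => //; rewrite -/a ha eqxx.
  have hd : d = 0 by move/eqP: hbd; rewrite mulf_eq0 (negbTE hb) => /eqP.
  have hc : c != 0 by case: (ne i1) => //; rewrite -/d hd eqxx.
  rewrite (nz (W i0 i0) (W' i1 i1) b hb); last first.
    apply: (mulIf hb); transitivity (W i0 i0 * b + W i1 i0 * d); first by rewrite hd; ring.
    by rewrite (Q0 i1) ha; ring.
  rewrite (nz (W i1 i1) (W' i0 i0) c hc); first by rewrite addnC.
  apply: (mulIf hc); transitivity (W i0 i1 * a + W i1 i1 * c); first by rewrite ha; ring.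
  by rewrite (Q1 i0) hd; ring.
have hc : c = 0 by move/eqP: hac; rewrite mulf_eq0 (negbTE ha) => /eqP.
have hd : d != 0 by case: (ne i1) => //; rewrite -/c hc eqxx.
have hb : b = 0 by move/eqP: hbd; rewrite mulf_eq0 (negbTE hd) orbF => /eqP.
rewrite (nz (W i0 i0) (W' i0 i0) a ha); last first.
  apply: (mulIf ha); transitivity (W i0 i0 * a + W i1 i0 * c); first by rewrite hc; ring.
  by rewrite (Q0 i0) hb; ring.
rewrite (nz (W i1 i1) (W' i1 i1) d hd) //.
apply: (mulIf hd); transitivity (W i0 i1 * b + W i1 i1 * d); first by rewrite hb; ring.
by rewrite (Q1 i1) hc; ring.
Qed.

Lemma mulE2' (A B : 'M[K]_2) i j : (A *m B) i j = A i i0 * B i0 j + A i i1 * B i1 j.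
Proof. by rewrite mxE sum2. Qed.

Lemma iso_diag (W : 'M[K]_2) (c0 c1 p q r s : K) : c0 != 0 -> c1 != 0 ->
  p = W i0 i0 / c0 -> q = W i0 i1 * c0 / c1 ^+ 2 ->
  r = W i1 i0 * c1 / c0 ^+ 2 -> s = W i1 i1 / c1 ->
  alg_iso (evoMul W) (evoMul (mx2 p q r s)).
Proof.
move=> h0 h1 ep eq0 er es; exists (mx2 c0 0 0 c1); split.
  have [] // := @mulmx1_unit _ _ (mx2 c0 0 0 c1) (mx2 c0^-1 0 0 c1^-1).
  apply/matrixP => i j; rewrite mulE2' !mxE.
  by case: (ord2 i) => ->; case: (ord2 j) => -> /=; rewrite ?mulfV //; ring.
move=> x y; apply: rv2P; rewrite !mulE2 !evoE !mulE2 !mxE /= ?ep ?eq0 ?er ?es; field; 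
  by rewrite ?h0 ?h1.
Qed.

Lemma iso_anti (W : 'M[K]_2) (c0 c1 p q r s : K) : c0 != 0 -> c1 != 0 ->
  p = W i1 i1 / c0 -> q = W i1 i0 * c0 / c1 ^+ 2 ->
  r = W i0 i1 * c1 / c0 ^+ 2 -> s = W i0 i0 / c1 ->
  alg_iso (evoMul W) (evoMul (mx2 p q r s)).
Proof.
move=> h0 h1 ep eq0 er es; exists (mx2 0 c1 c0 0); split.
  have [] // := @mulmx1_unit _ _ (mx2 0 c1 c0 0) (mx2 0 c0^-1 c1^-1 0).
  apply/matrixP => i j; rewrite mulE2' !mxE.
  by case: (ord2 i) => ->; case: (ord2 j) => -> /=; rewrite ?mulfV //; ring.
move=> x y; apply: rv2P; rewrite !mulE2 !evoE !mulE2 !mxE /= ?ep ?eq0 ?er ?es; field; 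
  by rewrite ?h0 ?h1.
Qed.

Lemma cntE (a b c d : K) : cnt (mx2 a b c d) = addn (a != 0) (d != 0).
Proof. by rewrite /cnt !mxE. Qed.

Lemma detE (a b c d : K) :
  let W := mx2 a b c d in W i0 i0 * W i1 i1 - W i0 i1 * W i1 i0 = a * d - b * c.
Proof. by rewrite /= !mxE. Qed.
End S.

Notation i0 := (@ord0 1).
Notation i1 := (@ord_max 1).

Theorem theorem3p4 (K : fieldType) (mul : 'rV[K]_2 -> 'rV[K]_2 -> 'rV[K]_2) :
  bilinear2 mul -> is_evolution mul -> is_simple mul ->
  let T1 := exists l : K, l != 0 /\ alg_iso mul (typeII02 l) in
  let T2 := exists l : K, l != 0 /\ alg_iso mul (typeII13 l) in
  let T3 := exists l m : K, [/\ l != 0, m != 0, l * m != 1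
                              & alg_iso mul (typeII24 l m)] in
  (T1 /\ ~ T2 /\ ~ T3) \/ (~ T1 /\ T2 /\ ~ T3) \/ (~ T1 /\ ~ T2 /\ T3).
Proof.
move=> hbil [B [hB hev]] [_ hs] T1 T2 T3.
set W := Wof mul B.
have iso0 : alg_iso mul (evoMul W).
  exists (invmx B); split; first by rewrite unitmx_inv.
  exact: expand.
have [h10 h01 hD] := W_conds (simple_transfer iso0 hs).
have c1 : T1 -> cnt W = 0%N.
  case=> l [hl hi]; rewrite (invariant _ (iso_trans (iso_sym iso0) hi)) /cnt !mxE /= ?eqxx //.
  by rewrite ?mxE /= mul0r mulr1 sub0r oppr_eq0.
have c2 : T2 -> cnt W = 1%N.
  case=> l [hl hi]; rewrite (invariant _ (iso_trans (iso_sym iso0) hi)) /cnt !mxE /= ?oner_eq0 ?eqxx //.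
  by rewrite ?mxE /= mul1r mulr1 sub0r oppr_eq0.
have c3 : T3 -> cnt W = 2%N.
  case=> l [m [hl hm hlm hi]]; rewrite (invariant _ (iso_trans (iso_sym iso0) hi)) /cnt !mxE /= ?oner_eq0 //.
  by rewrite ?mxE /= !mul1r subr_eq0 eq_sym.
rewrite /cnt in c1 c2 c3.
case: (eqVneq (W i0 i0) 0) => e0; case: (eqVneq (W i1 i1) 0) => e1;
  rewrite ?e0 ?e1 ?eqxx /= in c1 c2 c3.
- left; split; last by split; [move/c2 | move/c3].
  exists (W i0 i1 * W i1 i0 ^+ 2); split.
    by rewrite ?mulf_eq0 ?expf_eq0 /= ?negb_or ?(negbTE h10) ?(negbTE h01).
  apply: (iso_trans iso0); apply: (iso_diag (c0 := 1) (c1 := (W i1 i0)^-1)) => //;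
  rewrite ?e0 ?e1 ?mul0r ?oner_eq0 ?mulf_eq0 ?invr_eq0 ?expf_eq0 /= ?negb_or ?(negbTE h10) ?(negbTE h01) //; field;
       by rewrite ?(negbTE h10) ?(negbTE h01) ?oner_eq0 ?invr_eq0.
- right; left; split; first by move/c1.
  split; last by move/c3.
  exists (W i1 i0 * W i0 i1 ^+ 2 / W i1 i1 ^+ 3); split.
    by rewrite ?mulf_eq0 ?invr_eq0 ?expf_eq0 /= ?negb_or ?(negbTE h10) ?(negbTE h01) ?(negbTE e1).
  apply: (iso_trans iso0); apply: (iso_anti (c0 := W i1 i1) (c1 := W i1 i1 ^+ 2 / W i0 i1)) => //;
  rewrite ?e0 ?e1 ?mul0r ?oner_eq0 ?mulf_eq0 ?invr_eq0 ?expf_eq0 /= ?negb_or ?(negbTE h10) ?(negbTE h01) ?(negbTE e1) //; field;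
       by rewrite ?(negbTE h10) ?(negbTE h01) ?(negbTE e1) ?oner_eq0 ?invr_eq0.
- right; left; split; first by move/c1.
  split; last by move/c3.
  exists (W i0 i1 * W i1 i0 ^+ 2 / W i0 i0 ^+ 3); split.
    by rewrite ?mulf_eq0 ?invr_eq0 ?expf_eq0 /= ?negb_or ?(negbTE h10) ?(negbTE h01) ?(negbTE e0).
  apply: (iso_trans iso0); apply: (iso_diag (c0 := W i0 i0) (c1 := W i0 i0 ^+ 2 / W i1 i0)) => //;
  rewrite ?e0 ?e1 ?mul0r ?oner_eq0 ?mulf_eq0 ?invr_eq0 ?expf_eq0 /= ?negb_or ?(negbTE h10) ?(negbTE h01) ?(negbTE e0) //; field;
       by rewrite ?(negbTE h10) ?(negbTE h01) ?(negbTE e0) ?oner_eq0 ?invr_eq0.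
- right; right; split; first by move/c1.
  split; first by move/c2.
  exists (W i0 i1 * W i0 i0 / W i1 i1 ^+ 2), (W i1 i0 * W i1 i1 / W i0 i0 ^+ 2); split.
  + by rewrite ?mulf_eq0 ?invr_eq0 ?expf_eq0 /= ?negb_or ?(negbTE h10) ?(negbTE h01) ?(negbTE e0) ?(negbTE e1).
  + by rewrite ?mulf_eq0 ?invr_eq0 ?expf_eq0 /= ?negb_or ?(negbTE h10) ?(negbTE h01) ?(negbTE e0) ?(negbTE e1).
  + apply/negP => /eqP e; move: hD.
    have -> : W i0 i0 * W i1 i1 - W i0 i1 * W i1 i0 = W i0 i0 * W i1 i1 *
      (1 - (W i0 i1 * W i0 i0 / W i1 i1 ^+ 2) * (W i1 i0 * W i1 i1 / W i0 i0 ^+ 2)).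
      by field; rewrite ?(negbTE e0) ?(negbTE e1).
    by rewrite e subrr mulr0 eqxx.
  apply: (iso_trans iso0); apply: (iso_diag (c0 := W i0 i0) (c1 := W i1 i1)) => //;
  rewrite ?e0 ?e1 ?mul0r ?oner_eq0 ?mulf_eq0 ?invr_eq0 ?expf_eq0 /= ?negb_or ?(negbTE h10) ?(negbTE h01) ?(negbTE e0) ?(negbTE e1) //; field;
       by rewrite ?(negbTE h10) ?(negbTE h01) ?(negbTE e0) ?(negbTE e1) ?oner_eq0 ?invr_eq0.
Qed.
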